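(* Let $X$ be a nonnegative random variable with c.d.f. $F$ and $\overline{F}=1-F$, and let $\boldsymbol{\Lambda}$ be a random vector with values in $\mathcal{R}\subseteq\mathbb{R}^n$ and distribution $H_{1,\ldots,n}$, such that conditionally on $\boldsymbol{\Lambda}=\boldsymbol{\lambda}$, $X$ has c.d.f. $C(\cdot;\boldsymbol{\lambda})$ (with $\overline{C}=1-C$). Let $q\in[0,1)$ and, for $\boldsymbol{\lambda}\in\mathcal{R}$, let $q^\ast(\boldsymbol{\lambda})=C(VaR_q[X];\boldsymbol{\lambda})$ and let $CTE_{q^\ast}[X\mid\boldsymbol{\Lambda}=\boldsymbol{\lambda}]$ denote the conditional tail expectation at level $q^\ast(\boldsymbol{\lambda})$ of the distribution $C(\cdot;\boldsymbol{\lambda})$. Then, whenever the quantities involved exist, \[ CTE_q[X]=\frac{\mathbf{E}\left[\overline{C}(VaR_q[X];\boldsymbol{\Lambda})\,CTE_{q^\ast}[X\mid\boldsymbol{\Lambda}]\right]}{\overline{F}(VaR_q[X])}. \]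
   Context: For a random variable $Y$ and $q\in[0,1)$: $VaR_q[Y]=\inf\{x\in\mathbb{R}:\mathbf{P}[Y\le x]\ge q\}$ and $CTE_q[Y]=\mathbf{E}[Y\mid Y>VaR_q[Y]]$; these are applied to a conditional distribution in the obvious way. *)

(* Defs.v *)
From HB Require Import structures.
From mathcomp Require Import all_boot all_order all_algebra.
From mathcomp Require Import all_classical all_reals all_analysis.
Set Implicit Arguments. Unset Strict Implicit. Unset Printing Implicit Defensive.
Import Order.TTheory GRing.Theory Num.Theory.
Local Open Scope classical_set_scope.
Local Open Scope ring_scope.

(* The measurable space R^n (row vectors) with the product (= Borel)
   sigma-algebra, generated by the coordinate maps. *)
Definition RnT (R : realType) (n : nat) := 'rV[R]_n.
HB.instance Definition _ (R : realType) (n : nat) := Choice.on (RnT R n).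
HB.instance Definition _ (R : realType) (n : nat) :=
  isPointed.Build (RnT R n) (0 : 'rV[R]_n).

Definition Rn_gen (R : realType) (n : nat) : set (set (RnT R n)) :=
  [set B | exists i : 'I_n, exists A : set R,
       measurable A /\ B = (fun v : 'rV[R]_n => v ord0 i) @^-1` A].

Definition Rn (R : realType) (n : nat) := g_sigma_algebraType (@Rn_gen R n).
HB.instance Definition _ (R : realType) (n : nat) :=
  Measurable.copy (Rn R n) (g_sigma_algebraType (@Rn_gen R n)).

Local Open Scope ereal_scope.

Definition VaR d (T : measurableType d) (R : realType)
  (mu : {measure set T -> \bar R}) (Y : T -> R) (q : R) : \bar R :=
  ereal_inf [set x%:E | x in [set x : R | q%:E <= mu [set t | Y t <= x]%R]].

Definition CTE d (T : measurableType d) (R : realType)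
  (mu : {measure set T -> \bar R}) (Y : T -> R) (q : R) : \bar R :=
  let v := VaR mu Y q in
  (\int[mu]_(t in [set t | v < (Y t)%:E]) (Y t)%:E)
    * (mu [set t | v < (Y t)%:E])^-1.

(* Main.v *)
Require Import Defs.
From HB Require Import structures.
From mathcomp Require Import all_boot all_order all_algebra.
From mathcomp Require Import all_classical all_reals all_analysis.
From mathcomp Require Import measurable_realfun.
Import Order.TTheory GRing.Theory Num.Theory.
Local Open Scope classical_set_scope.
Local Open Scope ring_scope.
Local Open Scope ereal_scope.

Lemma mgt (R : realType) (v : \bar R) : measurable [set y : R | v < y%:E].
Proof.
case: v => [r| |].
- rewrite (_ : [set _ | _] = `]r, +oo[%classic); first exact: measurable_itv.
  by apply/seteqP; split => y /=; rewrite in_itv /= andbT lte_fin.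
- by rewrite (_ : [set _ | _] = set0) //; apply/seteqP; split => y //=.
- rewrite (_ : [set _ | _] = setT) //; apply/seteqP; split => y //= _.
  exact: ltNyr.
Qed.

Lemma mle (R : realType) (v : \bar R) : measurable [set y : R | y%:E <= v].
Proof.
rewrite (_ : [set _ | _] = ~` [set y : R | v < y%:E]); first by apply: measurableC; apply: mgt.
by apply/seteqP; split => y /=; rewrite leNgt => /negP.
Qed.

Lemma measC1 (R : realType) d (T : measurableType d)
  (m : {measure set T -> \bar R}) (A : set T) :
  m setT = 1 -> measurable A -> m (~` A) = 1 - m A.
Proof.
move=> m1 mA.
have h : m setT = m A + m (~` A).
  by rewrite -(setUCr A); apply: measureU => //; [exact: measurableC|exact: setICr].
rewrite m1 in h; rewrite h.
have Af : m A \is a fin_num.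
  rewrite ge0_fin_numE // (le_lt_trans _ (ltry 1)) // -m1.
  by apply: le_measure => //; rewrite inE.
by rewrite [m A + _]addeC addeK.
Qed.
Arguments mgt {R}.
Arguments mle {R}.
Arguments measC1 {R d T m A}.



Lemma key (R : realType) (m : {measure set R -> \bar R}) (v : \bar R) :
  m setT = 1 ->
  (1 - m [set y | y%:E <= v]) * CTE m id (fine (m [set y | y%:E <= v]))
  = \int[m]_(y in [set y | v < y%:E]) y%:E.
Proof.
move=> m1.
set B := [set y | y%:E <= v]. set A := [set y | v < y%:E].
have mA : measurable A := mgt v.
have mB : measurable B := mle v.
have BA : A = ~` B.
  by apply/seteqP; split => y /=; rewrite /A /B /= ltNge => /negP.
have mAc : m A = 1 - m B by rewrite BA measC1.
have Bf : m B \is a fin_num.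
  rewrite ge0_fin_numE // (le_lt_trans _ (ltry 1)) // -m1.
  by apply: le_measure => //; rewrite inE.
set c := fine (m B).
have cE : c%:E = m B by rewrite fineK.
rewrite /CTE.
set w := VaR m id c.
set A' := [set t | w < (id t)%:E].
have mA' : measurable A' := mgt w.
have mle' : forall x : R, measurable [set t : R | t <= x]%R.
  move=> x; rewrite (_ : [set _ | _] = [set t : R | t%:E <= x%:E]); first exact: mle.
  by apply/seteqP; split => y /=; rewrite lee_fin.
have SP : forall x : R, w < x%:E -> c%:E <= m [set t | t <= x]%R.
  move=> x /ereal_inf_lt [_ [x' /= Sx' <-] x'x].
  apply: (le_trans Sx'); apply: le_measure; rewrite ?inE //.
  by move=> t /= tx; apply: (le_trans tx); apply/ltW; rewrite -lte_fin.
have N0 : forall x : R, w < x%:E -> m (B `&` [set y | x%:E < y%:E]) = 0.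
  move=> x /SP Sx.
  have [xv|vx] := leP (x%:E) v; last first.
    rewrite (_ : _ `&` _ = set0) ?measure0 //.
    apply/seteqP; split => y //= [yv xy].
    by move: (lt_trans (le_lt_trans yv vx) xy); rewrite ltxx.
  set D := [set t | t <= x]%R.
  have DB : D `<=` B by move=> t /= tx; apply: le_trans xv; rewrite lee_fin.
  have h : m B = m D + m (B `&` [set y | x%:E < y%:E]).
    rewrite -measureU; [|exact: mle'|by apply: measurableI => //; exact: mgt|].
      congr (m _); apply/seteqP; split => y.
        move=> By; have [yx|xy] := leP y x; [by left|right; split => //].
      by case => [/DB //|[]].
    apply/seteqP; split => y // [/= yx [_]]; rewrite lte_fin => xy.
    by move: (le_lt_trans yx xy); rewrite ltxx.
  apply/eqP; rewrite eq_le measure_ge0 andbT.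
  have Df : m D \is a fin_num.
    rewrite ge0_fin_numE // (le_lt_trans _ (ltry 1)) // -m1.
    apply: le_measure; [by apply: mem_set; apply: mle'|by apply: mem_set|by []].
  rewrite leNgt; apply/negP => pos.
  have := lteDl (m (B `&` [set y | x%:E < y%:E])) Df; rewrite pos -h => hh.
  by move: (le_lt_trans Sx hh); rewrite cE ltxx.
have negl : m.-negligible (A' `\` A).
  have [w_oo|w_noo] := eqVneq w +oo.
    rewrite (_ : A' `\` A = set0); first exact: negligible_set0.
    apply/seteqP; split => y // [] /=; rewrite /A' /= w_oo //.
  have [xs [xsP xsC]] : exists xs : nat -> R,
      (forall k, w < (xs k)%:E) /\ (forall y, w < y%:E -> exists k, (xs k < y)%R).
    have : (exists s : R, w = s%:E) \/ w = -oo.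
      by move: w_noo; case: (w) => [s _|//|_]; [left; exists s|right].
    case => [[s ->]|->].
    - exists (fun k => s + k.+1%:R^-1)%R; split.
        by move=> k; rewrite lte_fin ltrDl invr_gt0 ltr0n.
      by move=> y; rewrite lte_fin => /ltr_add_invr.
    - exists (fun k => - k%:R)%R; split => [k|y _]; first exact: ltNyr.
      by exists (Num.Def.archi_bound y); rewrite ltrNl; exact: unstable.ltrNbound.
  apply: (@negligibleS _ _ _ _ (\bigcup_k (B `&` [set y | (xs k)%:E < y%:E]))).
    move=> y [wy nAy]; have [k yk] := xsC y wy; exists k => //; split => //=.
    by rewrite /B /= leNgt; apply/negP.
  apply: negligible_bigcup => k.
  have mk : measurable (B `&` [set y | (xs k)%:E < y%:E]).
    by apply: measurableI => //; exact: mgt.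
  exact: ((negligibleP m mk).2 (N0 _ (xsP k))).
have AA' : A `<=` A'.
  move=> y vy; rewrite /A' /=.
  have [x [Sx xy]] : exists x : R, c%:E <= m [set t | t <= x]%R /\ (x < y)%R.
    have : (exists r : R, v = r%:E) \/ v = -oo \/ v = +oo.
      by case: (v) => [r||]; [left; exists r|right; right|right; left].
    rewrite /A /= in vy; rewrite /B in cE.
    case => [[r Ev]|[Ev|Ev]]; rewrite Ev in vy cE.
    - exists r; split; last by rewrite -lte_fin.
      rewrite cE; apply: le_measure; [by apply: mem_set; apply: mle|by apply: mem_set; apply: mle'|].
      by move=> t /=; rewrite lee_fin.
    - exists (y - 1)%R; split; last by rewrite ltrBlDr ltrDl ltr01.
      rewrite cE (_ : [set _ | _] = set0) ?measure0 ?measure_ge0 //.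
      by apply/seteqP; split => t //=; rewrite leeNy_eq.
    - by move: vy; rewrite ltNge leey.
  apply: (@le_lt_trans _ _ x%:E); last by rewrite lte_fin.
  by apply: ereal_inf_lbound; exists x.
have mAA : m A' = m A.
  rewrite -(setDUK AA') measureU //; last 2 first.
  - exact: measurableD.
  - by apply/seteqP; split => y // [? []].
  by rewrite ((negligibleP m (measurableD mA' mA)).1 negl) adde0.
have mEF : forall D : set R, measurable_fun D (fun t : R => t%:E).
  by move=> D; exact: EFin_measurable.
have iAA : \int[m]_(t in A') t%:E = \int[m]_(y in A) y%:E.
  rewrite (integral_mkcond A') (integral_mkcond A); apply: ae_eq_integral => //.
  - exact: ((measurable_restrictT EFin mA').1 (mEF A')).
  - exact: ((measurable_restrictT EFin mA).1 (mEF A)).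
  apply: negligibleS negl => y /= H.
  case: (pselect (A' y)) => hA'; last first.
    exfalso; apply: H => _; rewrite !patchE !memNset //.
    by move=> Ay; apply: hA'; exact: AA'.
  split => // hA; apply: H => _; rewrite !patchE !mem_set //.
rewrite iAA mAA -mAc.
have [mA0|mA0] := eqVneq (m A) 0.
  by rewrite mA0 mul0e; apply/esym/null_set_integral => //; apply/eqP.
have Af : m A \is a fin_num.
  rewrite ge0_fin_numE // (le_lt_trans _ (ltry 1)) // -m1.
  by apply: le_measure => //; rewrite inE.
by rewrite muleCA divee ?mule1.
Qed.



Section K.
Context (R : realType) (d : measure_display) (T : measurableType d)
  (P : probability T R) (n : nat) (Lam : {mfun T >-> Rn R n})
  (C : R.-pker (Rn R n) ~> R).

Definition lP : unit -> {measure set T -> \bar R} := fun _ => P.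
Let mlP U : measurable U -> measurable_fun [set: unit] (lP ^~ U).
Proof. move=> _ ; rewrite /lP; exact: (measurable_cst (P U)). Qed.
HB.instance Definition _ := @isKernel.Build _ _ _ _ R lP mlP.
Let lP1 x : lP x [set: T] = 1. Proof. exact: probability_setT. Qed.
HB.instance Definition _ := @Kernel_isProbability.Build _ _ _ _ R lP lP1.

Definition kC : unit * T -> {measure set R -> \bar R} := fun p => C (Lam p.2).
Let mkC U : measurable U -> measurable_fun [set: unit * T] (kC ^~ U).
Proof.
move=> mU; apply: (measurableT_comp (measurable_kernel C U mU)).
exact: measurableT_comp.
Qed.
HB.instance Definition _ := @isKernel.Build _ _ _ _ R kC mkC.
Let kC1 x : kC x [set: R] = 1. Proof. exact: prob_kernel. Qed.
HB.instance Definition _ := @Kernel_isProbability.Build _ _ _ _ R kC kC1.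

Lemma mlC U : measurable U -> measurable_fun [set: T] (fun t => C (Lam t) U).
Proof.
move=> mU; apply: (measurableT_comp (measurable_kernel C U mU)).
exact: measurable_funP.
Qed.

Definition nu2 := mkcomp lP kC tt.

Lemma nu2E U : nu2 U = \int[P]_t C (Lam t) U.
Proof. by []. Qed.

Lemma integral_nu2 (f : R -> \bar R) : (forall z, 0 <= f z) -> measurable_fun [set: R] f ->
  \int[nu2]_z f z = \int[P]_t (\int[C (Lam t)]_z f z).
Proof. by move=> f0 mf; rewrite /nu2 /= integral_kcomp. Qed.

End K.
Arguments nu2 {R d T} P {n} Lam C.
Arguments mlC {R d T n} Lam C {U}.



Lemma mleR (R : realType) (x : R) : measurable [set t : R | t <= x]%R.
Proof.
rewrite (_ : [set _ | _] = [set t : R | t%:E <= x%:E]); first exact: mle.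
by apply/seteqP; split => y /=; rewrite lee_fin.
Qed.

Lemma nu_eq (R : realType) (d : measure_display) (T : measurableType d)
  (P : probability T R) (n : nat) (X : {mfun T >-> R}) (Lam : {mfun T >-> Rn R n})
  (C : R.-pker (Rn R n) ~> R) :
  (forall (x : R) (B : set (Rn R n)), measurable B ->
     P ([set t | (X t <= x)%R] `&` Lam @^-1` B)
     = \int[distribution P Lam]_(l in B) C l [set y | (y <= x)%R]) ->
  forall U, measurable U -> distribution P X U = nu2 P Lam C U.
Proof.
move=> hyp.
have nu21 : nu2 P Lam C setT = 1.
  rewrite nu2E (eq_integral (cst 1)); last by move=> t _; rewrite prob_kernel.
  rewrite integral_cst //= mul1e; exact: probability_setT.
have cdfE x : distribution P X [set y | y <= x]%R = nu2 P Lam C [set y | y <= x]%R.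
  have := hyp x setT measurableT; rewrite preimage_setT setIT => h.
  rewrite [LHS]h ge0_integral_distribution //.
  by apply: measurable_kernel; exact: mleR.
apply: (measure_unique (RGenOInfty.G (R:=R)) (fun k => `](- k%:R)%R, +oo[%classic)).
- exact: RGenOInfty.measurableE.
- move=> _ _ [x ->] [y ->]; exists (Num.max x y).
  apply/seteqP; split => z /=; rewrite !in_itv /= !andbT.
    by move=> [xz yz]; rewrite gt_max xz yz.
  by rewrite gt_max => /andP[].
- by move=> k; exists (- k%:R)%R.
- apply/seteqP; split => // y _; exists (Num.Def.archi_bound y) => //=.
  by rewrite in_itv /= andbT ltrNl; exact: unstable.ltrNbound.
- move=> _ [x ->].
  rewrite (_ : `]x, +oo[%classic = ~` [set y | y <= x]%R).
    rewrite !measC1; [congr (1 - _); exact: cdfE|exact: nu21|exact: mleR|exact: probability_setT|exact: mleR].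
  by apply/seteqP; split => y /=; rewrite in_itv /= andbT ltNge => /negP.
- move=> k; apply: (le_lt_trans _ (ltry 1)); exact: probability_le1.
Qed.



Theorem corollary4p2 (R : realType) (d : measure_display) (T : measurableType d)
  (P : probability T R) (n : nat) (X : {mfun T >-> R}) (Lam : {mfun T >-> Rn R n})
  (C : R.-pker (Rn R n) ~> R) (q : R) :
  (forall t, (0 <= X t)%R) ->
  (* conditionally on Lam = l, X has distribution C l, i.e. c.d.f. C(. ; l) *)
  (forall (x : R) (B : set (Rn R n)), measurable B ->
     P ([set t | (X t <= x)%R] `&` Lam @^-1` B)
     = \int[distribution P Lam]_(l in B) C l [set y | (y <= x)%R]) ->
  (0 <= q < 1)%R ->
  (* existence of CTE_q[X]: Fbar(VaR_q[X]) > 0 *)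
  0 < 1 - P [set t | (X t)%:E <= VaR P X q] ->
  CTE P X q
  = (\int[P]_t
       ((1 - C (Lam t) [set y | y%:E <= VaR P X q])
        * CTE (C (Lam t)) id (fine (C (Lam t) [set y | y%:E <= VaR P X q]))))
    * (1 - P [set t | (X t)%:E <= VaR P X q])^-1.
Proof.
move=> X0 hyp q01 pos.
set v := VaR P X q.
set A := [set y : R | v < y%:E].
have mA : measurable A := mgt v.
set Ap := A `&` [set y : R | (0 <= y)%R].
have mAp : measurable Ap.
  apply: measurableI => //.
  rewrite (_ : [set _ | _] = `[0%R, +oo[%classic); first exact: measurable_itv.
  by apply/seteqP; split => y /=; rewrite in_itv /= andbT.
set g := (fun y : R => y%:E) \_ Ap.
have g0 : forall y, 0 <= g y.
  move=> y; rewrite /g patchE; case: ifP => // /set_mem [_ /= y0].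
  by rewrite lee_fin.
have mg : measurable_fun setT g := (measurable_restrictT _ mAp).1 (@EFin_measurable R Ap).
rewrite (eq_integral (fun t => \int[C (Lam t)]_(y in A) y%:E)); last first.
  by move=> t _; rewrite key //; exact: prob_kernel.
have mXv : measurable [set t | (X t)%:E <= v] := measurable_funPTI X (mle v).
have P1 : P setT = 1 by rewrite probability_setT.
rewrite -(measC1 P1 mXv).
have -> : ~` [set t | (X t)%:E <= v] = [set t | v < (X t)%:E].
  by apply/seteqP; split => t /=; rewrite ltNge => /negP.
rewrite /CTE -/v.
congr (_ * _).
transitivity (\int[P]_t g (X t)).
  rewrite integral_mkcond; apply: eq_integral => t _; rewrite /g !patchE.
  case: (pselect (v < (X t)%:E)) => h.
    by rewrite !mem_set //; split => //=; exact: X0.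
  by rewrite !memNset // => -[].
transitivity (\int[distribution P X]_y g y).
  by rewrite ge0_integral_distribution.
rewrite (eq_measure_integral (nu2 P Lam C)); last by move=> U mU _; apply: nu_eq.
rewrite integral_nu2 //.
have mEA : measurable_fun setT (EFin \_ A) :=
  (measurable_restrictT _ mA).1 (@EFin_measurable R A).
apply: ae_eq_integral => //.
- apply: measurable_fun_integral_kernel; [exact: mlC|exact: g0|exact: mg].
- have -> : (fun t => \int[C (Lam t)]_(y in A) y%:E) =
      (fun t => \int[C (Lam t)]_y ((EFin \_ A)^\+ y)) \-
      (fun t => \int[C (Lam t)]_y ((EFin \_ A)^\- y)).
    by apply/funext => t; rewrite integral_mkcond integralE.
  apply: emeasurable_funB.
    apply: measurable_fun_integral_kernel; first exact: mlC.
      by move=> z; exact: funepos_ge0.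
    exact: measurable_funepos.
  apply: measurable_fun_integral_kernel; first exact: mlC.
    by move=> z; exact: funeneg_ge0.
  exact: measurable_funeneg.
set phi := fun t => C (Lam t) `]-oo, 0%R[%classic.
have mphi : measurable_fun setT phi := mlC Lam C (measurable_itv _).
have iphi : \int[P]_t phi t = 0.
  rewrite /phi -nu2E -(nu_eq _ _ _ _ _ _ _ _ hyp); last exact: measurable_itv.
  have -> : distribution P X `]-oo, 0%R[%classic = P (X @^-1` `]-oo, 0%R[%classic) by [].
  rewrite (_ : _ @^-1` _ = set0) ?measure0 //.
  apply/seteqP; split => t //=; rewrite in_itv /= => Xt.
  by move: (le_lt_trans (X0 t) Xt); rewrite ltxx.
have aephi : ae_eq P setT phi (cst 0).
  apply/(ae_eq_integral_abs P measurableT mphi).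
  rewrite -iphi; apply: eq_integral => t _; rewrite gee0_abs //.
apply: (negligibleS _ aephi) => t /= H Hphi; apply: H => _.
have {}Hphi : phi t = 0 by exact: Hphi.
rewrite [RHS]integral_mkcond; apply: ae_eq_integral => //.
exists `]-oo, 0%R[%classic; split; [exact: measurable_itv|exact: Hphi|].
move=> y /= H; rewrite in_itv /= ltNge; apply/negP => y0; apply: H => _.
rewrite /g !patchE.
case: (pselect (A y)) => h.
  by rewrite !mem_set.
by rewrite !memNset // => -[].
Qed.
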